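(* Let $n\ge2$, $g\in H_n\rtimes S_n$ and $i\in I(g)$. Then $g_{[i]}$ lies in the centraliser $C_{H_n\rtimes S_n}(g)$ (in particular $g_{[i]}\in H_n\rtimes S_n$).
   Context: $\mathbb{N}=\{1,2,\dots\}$, $X_n=\{1,\dots,n\}\times\mathbb{N}$, permutations act on the right. $H_n$ is the group of bijections $g$ of $X_n$ with $z_i(g)\in\mathbb{N}$, $t_i(g)\in\mathbb{Z}$ such that $(i,m)g=(i,m+t_i(g))$ for all $m\ge z_i(g)$. $S_n$ acts by $(i,m)\sigma=(i\sigma,m)$; $H_n\rtimes S_n\le\mathrm{Sym}(X_n)$ is generated by $H_n$ and these; each $g$ is uniquely $\omega_g\sigma_g$ with $\omega_g\in H_n$, $\sigma_g\in S_n$, $t_i(g):=t_i(\omega_g)$. $[i]_g$ is the orbit of $i$ under $\langle\sigma_g\rangle$, $t_{[i]}(g)=\sum_{k\in[i]_g}t_k(g)$, $I(g)=\{i:t_{[i]}(g)\ne0\}$. For $i_1\in I(g)$, $m_1\in\mathbb{N}$: $X_{i,m}(g)=\{(i,m')\in X_n: m'\equiv m\bmod|t_{[i]}(g)|\}$ and $X_{[i_1],m_1}(g)=\bigsqcup_{q=1}^{|[i_1]_g|}X_{i_q,m_q}(g)$ with $i_q=i_1\sigma_g^{q-1}$, $m_q=m_1+\sum_{d=1}^{q-1}t_{i_d}(g)$. Sets are almost equal if their symmetric difference is finite. $\sim_g$ is the equivalence relation on $\{[k]_g:k\in I(g)\}$ generated by $[i]_g\sim_g[j]_g$ whenever some $\langle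 g\rangle$-orbit is almost equal to $X_{[i],d}(g)\sqcup X_{[j],e}(g)$ for some $d,e$. $\mathfrak{C}_g([i])=\{k:[k]_g\sim_g[i]_g\}$. $g_{[i]}\in\mathrm{Sym}(X_n)$ is the product of all infinite cycles of $g$ whose support is almost equal to $X_{[j'],d}(g)\sqcup X_{[j''],e}(g)$ for some $j',j''\in\mathfrak{C}_g([i])$ and $d,e\in\mathbb{N}$ (fixing all other points). *)

(* Defs.v *)
From HB Require Import structures.
From mathcomp Require Import all_boot all_order all_algebra all_fingroup.
From Stdlib Require Import Relations ClassicalEpsilon.
Set Implicit Arguments. Unset Strict Implicit. Unset Printing Implicit Defensive.
Import GRing.Theory Num.Theory.
Local Open Scope ring_scope.

(* Points of X_n = {1..n} x N.  The pair (i, k) : 'I_n * nat represents the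
   point (i+1, k+1) of X_n (a uniform shift of both coordinates). *)
Definition pt (n : nat) := ('I_n * nat)%type.

Definition transl n (w : pt n -> pt n) (i : 'I_n) (t : int) : Prop :=
  exists z : nat, forall m : nat, (z <= m)%N ->
    (w (i, m)).1 = i /\ ((w (i, m)).2%:Z = m%:Z + t).

Definition in_H n (w : pt n -> pt n) : Prop :=
  bijective w /\ forall i, exists t, transl w i t.

Definition sact n (s : {perm 'I_n}) (x : pt n) : pt n := (s x.1, x.2).

(* g = omega_g sigma_g (right actions: x g = (x omega) sigma), with
   t_i(g) = t_i(omega_g) = t i *)
Definition decomp n (g : pt n -> pt n) (s : {perm 'I_n}) (t : 'I_n -> int) : Prop :=
  exists w, in_H w /\ (forall i, transl w i (t i)) /\ forall x, g x = sact s (w x).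

Definition in_HS n (g : pt n -> pt n) : Prop := exists s t, decomp g s t.

Definition tcl n (s : {perm 'I_n}) (t : 'I_n -> int) (i : 'I_n) : int :=
  \sum_(k in porbit s i) t k.

Definition inI n (s : {perm 'I_n}) (t : 'I_n -> int) (i : 'I_n) : Prop :=
  tcl s t i != 0.

Definition Xim n (s : {perm 'I_n}) (t : 'I_n -> int) (i : 'I_n) (m : int)
  (x : pt n) : Prop :=
  x.1 = i /\ (x.2%:Z %% `|tcl s t i|)%Z = (m %% `|tcl s t i|)%Z.

Definition Xcl n (s : {perm 'I_n}) (t : 'I_n -> int) (i : 'I_n) (m : int)
  (x : pt n) : Prop :=
  exists q : nat, (q < #|porbit s i|)%N /\
    Xim s t ((s ^+ q)%g i) (m + \sum_(d < q) t ((s ^+ d)%g i)) x.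

Definition same_orb n (g : pt n -> pt n) (x y : pt n) : Prop :=
  exists k : nat, iter k g x = y \/ iter k g y = x.

Definition almost_eq n (A B : pt n -> Prop) : Prop :=
  exists l : seq (pt n), forall x, ~ (A x <-> B x) -> x \in l.

Definition infinite_orb n (g : pt n -> pt n) (x : pt n) : Prop :=
  ~ exists l : seq (pt n), forall y, same_orb g x y -> y \in l.

Definition almost_pair n (s : {perm 'I_n}) (t : 'I_n -> int)
  (j : 'I_n) (d : int) (j' : 'I_n) (e : int) (O : pt n -> Prop) : Prop :=
  (forall x, ~ (Xcl s t j d x /\ Xcl s t j' e x)) /\
  almost_eq O (fun x => Xcl s t j d x \/ Xcl s t j' e x).

(* generating relation of ~_g, on representatives in I(g) *)
Definition rel0 n (g : pt n -> pt n) (s : {perm 'I_n}) (t : 'I_n -> int)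
  (a b : 'I_n) : Prop :=
  exists (x0 : pt n) (d e : nat), almost_pair s t a d%:Z b e%:Z (same_orb g x0).

Definition base_rel n (g : pt n -> pt n) (s : {perm 'I_n}) (t : 'I_n -> int)
  (a b : 'I_n) : Prop :=
  inI s t a /\ inI s t b /\ (b \in porbit s a \/ rel0 g s t a b).

Definition inC n (g : pt n -> pt n) (s : {perm 'I_n}) (t : 'I_n -> int)
  (i k : 'I_n) : Prop :=
  inI s t i /\ inI s t k /\ clos_refl_sym_trans _ (base_rel g s t) k i.

Definition in_gi n (g : pt n -> pt n) (s : {perm 'I_n}) (t : 'I_n -> int)
  (i : 'I_n) (x : pt n) : Prop :=
  infinite_orb g x /\
  exists (j j' : 'I_n) (d e : nat),
    inC g s t i j /\ inC g s t i j' /\ almost_pair s t j d%:Z j' e%:Z (same_orb g x).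

Definition gsub n (g : pt n -> pt n) (s : {perm 'I_n}) (t : 'I_n -> int)
  (i : 'I_n) (x : pt n) : pt n :=
  if excluded_middle_informative (in_gi g s t i x) then g x else x.

(* Main.v *)
Require Import Defs.
From mathcomp Require Import all_boot all_order all_algebra all_fingroup.
From mathcomp Require Import zify ring.
From Stdlib Require Import Relations Classical ClassicalEpsilon FunctionalExtensionality PropExtensionality.
Set Implicit Arguments. Unset Strict Implicit. Unset Printing Implicit Defensive.
Import GRing.Theory Num.Theory.
Local Open Scope ring_scope.

Lemma dvdz_normr (d a : int) : (`|d| %| a)%Z = (d %| a)%Z.
Proof. by rewrite !dvdzE; congr (_ %| _)%N. Qed.

Lemma modE (M a b : int) : (a = b %[mod M])%Z <-> (M %| a - b)%Z.
Proof. by rewrite -eqz_mod_dvd; split => [->|/eqP]. Qed.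

Section Perm.
Variables (n : nat) (s : {perm 'I_n}) (t : 'I_n -> int).

Definition S (i : 'I_n) (a : nat) : int := \sum_(d < a) t ((s ^+ d)%g i).
Definition cyc (i : 'I_n) := #|porbit s i|.

Lemma S0 i : S i 0 = 0. Proof. by rewrite /S big_ord0. Qed.
Lemma S_rec i a : S i a.+1 = S i a + t ((s ^+ a)%g i).
Proof. by rewrite /S big_ord_recr. Qed.

Lemma expS_app a b i : (s ^+ (a + b))%g i = (s ^+ b)%g ((s ^+ a)%g i).
Proof. by rewrite expgnDr permM. Qed.

Lemma S_add i a b : S i (a + b) = S i a + S ((s ^+ a)%g i) b.
Proof.
elim: b => [|b IH]; first by rewrite S0 addn0 addr0.
by rewrite addnS !S_rec IH expS_app addrA.
Qed.

Lemma cyc_gt0 i : (0 < cyc i)%N.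
Proof. by rewrite lt0n card_porbit_neq0. Qed.

Lemma cyc_fix i : (s ^+ cyc i)%g i = i.
Proof. by rewrite permX iter_porbit. Qed.

Lemma cyc_le i : (cyc i <= n)%N.
Proof. by rewrite /cyc -[X in (_ <= X)%N](card_ord n) max_card. Qed.

Lemma cyc_perm q i : cyc ((s ^+ q)%g i) = cyc i.
Proof. by rewrite /cyc porbit_perm. Qed.

Lemma tcl_perm q i : tcl s t ((s ^+ q)%g i) = tcl s t i.
Proof. by rewrite /tcl porbit_perm. Qed.

Lemma mem_eq_porbit k j : k \in porbit s j -> porbit s k = porbit s j.
Proof. by move=> h; apply/eqP; rewrite eq_porbit_mem. Qed.

Lemma tclS i : tcl s t i = S i (cyc i).
Proof.
rewrite /tcl (eq_bigl (fun k => k \in traject s i (cyc i))); last first.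
  by move=> k; rewrite porbit_traject.
rewrite -big_uniq ?uniq_traject_porbit //.
elim: (cyc i) => [|c IH]; first by rewrite big_nil S0.
by rewrite trajectSr big_rcons /= IH S_rec permX.
Qed.

Lemma S_cyc_mul i l : S i (cyc i * l) = l%:Z * tcl s t i.
Proof.
elim: l => [|l IH]; first by rewrite muln0 S0 mul0r.
by rewrite mulnS S_add cyc_fix -tclS IH intS mulrDl mul1r.
Qed.

Lemma S_per i l r : S i (cyc i * l + r) = l%:Z * tcl s t i + S i r.
Proof.
have e: (s ^+ (cyc i * l))%g i = i.
  elim: l => [|k IHk]; first by rewrite muln0 expg0 perm1.
  by rewrite mulnS expS_app cyc_fix IHk.
by rewrite S_add S_cyc_mul e.
Qed.

Definition B : nat := \max_(k : 'I_n) `|t k|%N.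

Lemma tB k : (`|t k| <= B)%N.
Proof. exact: (leq_bigmax k). Qed.

Lemma S_bound i r : (- (r * B)%:Z <= S i r) && (S i r <= (r * B)%:Z).
Proof.
elim: r => [|r IH]; first by rewrite S0 mul0n.
rewrite S_rec; have := tB ((s ^+ r)%g i); move: IH; lia.
Qed.

End Perm.
Set Implicit Arguments. Unset Strict Implicit. Unset Printing Implicit Defensive.
Import GRing.Theory Num.Theory.
Local Open Scope ring_scope.

Lemma dvd_shift (T a b k : int) : a = b + k * T -> (T %| a)%Z = (T %| b)%Z.
Proof.
move=> ->; apply/dvdzP/dvdzP => [[q hq]|[q ->]].
  by exists (q - k); rewrite mulrBl -hq; ring.
by exists (q + k); ring.
Qed.

Section Line.
Variables (n : nat) (s : {perm 'I_n}) (t : 'I_n -> int).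

Lemma Xcl_iff j (d : int) (x : pt n) :
  Xcl s t j d x <-> exists q, (q < cyc s j)%N /\ x.1 = (s ^+ q)%g j /\
     (tcl s t j %| x.2%:Z - (d + S s t j q))%Z.
Proof.
split=> [[q [hq [h1 h2]]]|[q [hq [h1 h2]]]]; exists q; split => //; split => //.
  by move: h2; rewrite modE dvdz_normr tcl_perm.
by rewrite modE dvdz_normr tcl_perm.
Qed.

Lemma line_step j d (x y : pt n) : y.1 = s x.1 -> y.2%:Z = x.2%:Z + t x.1 ->
  (Xcl s t j d x <-> Xcl s t j d y).
Proof.
move=> e1 e2; rewrite !Xcl_iff; split.
  move=> [q [hq [h1 h2]]].
  have ys : y.1 = (s ^+ q.+1)%g j by rewrite e1 h1 expgSr permM.
  case: (ltnP q.+1 (cyc s j)) => hq1.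
    exists q.+1; split => //; split => //.
    rewrite (dvd_shift (b := x.2%:Z - (d + S s t j q)) (k := 0)) //.
    by rewrite e2 S_rec h1; ring.
  have eq1 : q.+1 = cyc s j by apply/eqP; rewrite eqn_leq hq1 hq.
  exists 0%N; split; first exact: cyc_gt0.
  split; first by rewrite ys eq1 cyc_fix expg0 perm1.
  rewrite (dvd_shift (b := x.2%:Z - (d + S s t j q)) (k := 1)) //.
  by rewrite e2 S0 mul1r tclS -eq1 S_rec h1; ring.
move=> [q [hq [h1 h2]]].
case: q hq h1 h2 => [|q] hq h1 h2.
  have c1 : cyc s j = (cyc s j).-1.+1 by rewrite prednK // cyc_gt0.
  have hx : x.1 = (s ^+ (cyc s j).-1)%g j.
    apply: (@perm_inj _ s); rewrite -e1 h1 expg0 perm1 -permM -expgSr -c1.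
    by rewrite cyc_fix.
  exists (cyc s j).-1; split; first by rewrite prednK ?leqnn // cyc_gt0.
  split => //.
  rewrite (dvd_shift (b := y.2%:Z - (d + S s t j 0)) (k := -1)) //.
  by rewrite e2 S0 tclS {2}c1 S_rec -hx; ring.
have hx : x.1 = (s ^+ q)%g j.
  by apply: (@perm_inj _ s); rewrite -e1 h1 expgSr permM.
exists q; split; first exact: ltnW.
split => //.
rewrite (dvd_shift (b := y.2%:Z - (d + S s t j q.+1)) (k := 0)) //.
by rewrite e2 S_rec -hx; ring.
Qed.

End Line.
Set Implicit Arguments. Unset Strict Implicit. Unset Printing Implicit Defensive.
Import GRing.Theory Num.Theory.
Local Open Scope ring_scope.

Lemma iter_per (T : Type) (f : T -> T) p x q : iter p f x = x -> iter (q * p) f x = x.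
Proof. move=> hx; elim: q => [//|q IH]; by rewrite mulSn iterD IH hx. Qed.

Lemma list_bound n (l : seq (pt n)) : exists N, forall x : pt n, x \in l -> (x.2 < N)%N.
Proof.
elim: l => [|y l [N HN]]; first by exists 0%N.
exists (maxn N y.2.+1) => x; rewrite in_cons => /orP [/eqP ->|/HN hx]; [by rewrite leq_max leqnn orbT | by rewrite leq_max hx].
Qed.

Lemma box_almost n (A B : pt n -> Prop) N :
  (forall x, ~ (A x <-> B x) -> (x.2 < N)%N) -> almost_eq A B.
Proof.
move=> hN; exists [seq (i, m) | i <- enum 'I_n, m <- iota 0 N] => x /hN hx.
apply/allpairsP; exists (x.1, x.2); split => //; first by rewrite mem_enum.
by rewrite mem_iota.
by case: x {hx}.
Qed.

Lemma ev_out n (f : nat -> pt n) : injective f ->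
  forall N, exists A, forall a, (A <= a)%N -> (N <= (f a).2)%N.
Proof.
move=> finj N.
have H: forall l : seq (pt n), exists A, forall a, (A <= a)%N -> f a \notin l.
  elim=> [|y l [A HA]]; first by exists 0%N.
  case: (classic (exists a, f a = y)) => [[a0 ha0]|hno].
    exists (maxn A a0.+1) => a ha; rewrite in_cons negb_or HA; last by lia.
    rewrite andbT; apply/eqP => e; have := finj _ _ (etrans e (esym ha0)); lia.
  exists A => a ha; rewrite in_cons negb_or HA // andbT.
  by apply/eqP => e; apply: hno; exists a.
have [A HA] := H [seq (i, m) | i <- enum 'I_n, m <- iota 0 N].
exists A => a ha; rewrite leqNgt; apply/negP => hlt.
have hin : f a \in [seq (i, m) | i <- enum 'I_n, m <- iota 0 N].
  apply/allpairsP; exists ((f a).1, (f a).2); split => //.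
    by rewrite mem_enum.
  by rewrite mem_iota.
  by case: (f a).
by move: (HA a ha); rewrite hin.
Qed.

Section Orb.
Variables (n : nat) (g h : pt n -> pt n).
Hypotheses (gK : cancel g h) (hK : cancel h g).

Lemma iter_gh a x : iter a g (iter a h x) = x.
Proof. elim: a x => [//|a IH] x; by rewrite iterSr iterS hK IH. Qed.

Lemma iter_hg a x : iter a h (iter a g x) = x.
Proof. elim: a x => [//|a IH] x; by rewrite iterSr iterS gK IH. Qed.

Lemma iter_inj a : injective (iter a g).
Proof. by move=> x y e; rewrite -(iter_hg a x) e iter_hg. Qed.

Lemma same_orb_g x : same_orb g (g x) = same_orb g x.
Proof.
apply: functional_extensionality => y; apply: propositional_extensionality.
split=> [[k [e|e]]|[k [e|e]]].
- by exists k.+1; left; rewrite iterSr.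
- case: k e => [|k] e; first by exists 1%N; left.
  by exists k; right; apply: (can_inj gK); rewrite -e iterS.
- case: k e => [|k] e; first by exists 1%N; right; rewrite /= -e.
  by exists k; left; rewrite -iterSr.
- by exists k.+1; right; rewrite iterS e.
Qed.

Lemma same_orb_iter a x : same_orb g (iter a g x) = same_orb g x.
Proof. by elim: a => [//|a IH]; rewrite iterS same_orb_g. Qed.

Lemma same_orb_h x : same_orb g (h x) = same_orb g x.
Proof. by rewrite -{2}(hK x) same_orb_g. Qed.

Lemma same_orb_iterh a x : same_orb g (iter a h x) = same_orb g x.
Proof. by elim: a => [//|a IH]; rewrite iterS same_orb_h. Qed.

Lemma periodic p x : (0 < p)%N -> iter p g x = x -> ~ infinite_orb g x.
Proof.
move=> hp hx hinf; apply: hinf.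
exists [seq iter r g x | r <- iota 0 p].
have H1: forall a, iter a g x \in [seq iter r g x | r <- iota 0 p].
  move=> a; apply/mapP; exists (a %% p)%N; first by rewrite mem_iota /= ltn_pmod.
  by rewrite {1}(divn_eq a p) addnC iterD iter_per.
move=> y [k [<-|e]]; first exact: H1.
have hy : iter p g y = y.
  apply: (@iter_inj k); by rewrite -!iterD addnC iterD e hx.
have -> : y = iter (k * p - k)%N g x.
  by rewrite -e -iterD (subnK (_ : k <= k * p)%N) ?iter_per // leq_pmulr.
exact: H1.
Qed.

Lemma inf_iter a x : infinite_orb g x -> infinite_orb g (iter a g x).
Proof. by rewrite /infinite_orb same_orb_iter. Qed.

Lemma inf_iterh a x : infinite_orb g x -> infinite_orb g (iter a h x).
Proof. by rewrite /infinite_orb same_orb_iterh. Qed.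

Lemma fwd_inj x : infinite_orb g x -> injective (fun a => iter a g x).
Proof.
move=> hinf a b e.
suff H: forall a b, (a < b)%N -> iter a g x = iter b g x -> False.
  by case: (ltngtP a b) => // hab; [case: (H _ _ hab e) | case: (H _ _ hab (esym e))].
move=> {}a {}b hab {}e; apply: (periodic (p := (b - a)%N) _ _ hinf); first lia.
apply: (@iter_inj a); by rewrite -iterD subnKC ?(ltnW hab) // e.
Qed.

Lemma bwd_inj x : infinite_orb g x -> injective (fun a => iter a h x).
Proof.
move=> hinf a b e.
suff H: forall a b, (a < b)%N -> iter a h x = iter b h x -> False.
  by case: (ltngtP a b) => // hab; [case: (H _ _ hab e) | case: (H _ _ hab (esym e))].
move=> {}a {}b hab {}e; apply: (periodic (p := (b - a)%N) _ _ hinf); first lia.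
have := congr1 (iter b g) e; rewrite iter_gh.
have eb : b = (b - a + a)%N by rewrite subnK // ltnW.
by rewrite {1}eb iterD iter_gh.
Qed.

End Orb.
Set Implicit Arguments. Unset Strict Implicit. Unset Printing Implicit Defensive.
Import Order.TTheory GRing.Theory Num.Theory.
Local Open Scope ring_scope.

Lemma pteq n (x : pt n) a (b : nat) : x.1 = a -> x.2%:Z = b%:Z -> x = (a, b).
Proof. by case: x => x1 x2 /= -> [->]. Qed.

Section Dyn.
Variables (n : nat) (g h : pt n -> pt n) (s : {perm 'I_n}) (t : 'I_n -> int) (Z : nat).
Hypotheses (gK : cancel g h) (hK : cancel h g)
  (gZ : forall k m, (Z <= m)%N -> (g (k, m)).1 = s k /\ (g (k, m)).2%:Z = m%:Z + t k).

Definition NB := (n * B t)%N.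
Definition M := (Z + 2 * NB)%N.

Lemma gZ' x : (Z <= x.2)%N -> (g x).1 = s x.1 /\ (g x).2%:Z = x.2%:Z + t x.1.
Proof. by case: x => k m; apply: gZ. Qed.

Lemma cycm_fix i l : (s ^+ (cyc s i * l))%g i = i.
Proof.
elim: l => [|k IHk]; first by rewrite muln0 expg0 perm1.
by rewrite mulnS expS_app cyc_fix IHk.
Qed.

Lemma S_small i r : (r <= n)%N -> (- NB%:Z <= S s t i r) && (S s t i r <= NB%:Z).
Proof.
move=> hr; have := S_bound s t i r; have : (r * B t <= NB)%N by rewrite leq_mul2r hr orbT.
rewrite /NB; lia.
Qed.

Lemma S_lo i a : (a %/ cyc s i)%N%:Z * tcl s t i - NB%:Z <= S s t i a.
Proof.
rewrite {2}(divn_eq a (cyc s i)) mulnC S_per.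
have hr : (a %% cyc s i < cyc s i)%N by rewrite ltn_pmod // cyc_gt0.
have := S_small i (ltnW (leq_trans hr (cyc_le s i))); lia.
Qed.

Lemma walk i (m a : nat) :
  (forall a', (a' < a)%N -> Z%:Z <= m%:Z + S s t i a') ->
  (iter a g (i, m)).1 = (s ^+ a)%g i /\ (iter a g (i, m)).2%:Z = m%:Z + S s t i a.
Proof.
elim: a => [|a IH] H; first by rewrite /= expg0 perm1 S0 addr0.
have [h1 h2] := IH (fun a' ha' => H a' (ltnW ha')).
have hz : (Z <= (iter a g (i, m)).2)%N.
  have := H a (ltnSn a); rewrite -h2; lia.
have [g1 g2] := gZ' hz.
rewrite iterS g1 g2 h1 h2 S_rec expgSr permM; split => //; ring.
Qed.

Lemma cstep u : (M <= u.2)%N ->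
  (iter (cyc s u.1) g u).1 = u.1 /\ (iter (cyc s u.1) g u).2%:Z = u.2%:Z + tcl s t u.1.
Proof.
case: u => i m /= hm.
have H : forall a', (a' < cyc s i)%N -> Z%:Z <= m%:Z + S s t i a'.
  move=> a' ha'; have := S_small i (ltnW (leq_trans ha' (cyc_le s i))).
  move: hm; rewrite /M; lia.
have [w1 w2] := walk H.
by rewrite w1 w2 cyc_fix tclS.
Qed.

Lemma div_le a c l : (0 < c)%N -> (a < c * l)%N -> (a %/ c <= l)%N.
Proof. move=> hc ha; have := leq_divM a c; nia. Qed.

Lemma ray_orb k m l : tcl s t k != 0 -> (M <= m)%N ->
  same_orb g (k, m) (k, (m + l * `|tcl s t k|)%N).
Proof.
move=> hT0 hm; rewrite /M in hm.
have hc := cyc_gt0 s k.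
case: (boolP (0 < tcl s t k)) => hT.
  exists (cyc s k * l)%N; left.
  have H : forall a', (a' < cyc s k * l)%N -> Z%:Z <= m%:Z + S s t k a'.
    move=> a' _; have := S_lo k a'.
    have : 0 <= (a' %/ cyc s k)%N%:Z * tcl s t k by rewrite mulr_ge0 // ltW.
    lia.
  have [w1 w2] := walk H.
  apply: pteq; first by rewrite w1 cycm_fix.
  rewrite w2 S_cyc_mul; nia.
exists (cyc s k * l)%N; right.
have hTn : tcl s t k < 0 by lia.
have H : forall a', (a' < cyc s k * l)%N ->
    Z%:Z <= (m + l * `|tcl s t k|)%N%:Z + S s t k a'.
  move=> a' ha'; have := S_lo k a'; have := div_le hc ha'.
  set q := (a' %/ cyc s k)%N; move=> hq.
  have : l%:Z * tcl s t k <= q%:Z * tcl s t k.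
    by nia.
  nia.
have [w1 w2] := walk H.
apply: pteq; first by rewrite w1 cycm_fix.
rewrite w2 S_cyc_mul; nia.
Qed.

Lemma inf_ray k m : tcl s t k != 0 -> (M <= m)%N -> infinite_orb g (k, m).
Proof.
move=> hT hm [lst Hl]; have [N HN] := list_bound lst.
have := HN _ (Hl _ (ray_orb N hT hm)) => /=.
have : (0 < `|tcl s t k|)%N by rewrite absz_gt0.
nia.
Qed.

End Dyn.
Set Implicit Arguments. Unset Strict Implicit. Unset Printing Implicit Defensive.
Import Order.TTheory GRing.Theory Num.Theory.
Local Open Scope ring_scope.

Section Struct.
Variables (n : nat) (g h : pt n -> pt n) (s : {perm 'I_n}) (t : 'I_n -> int) (Z : nat).
Hypotheses (gK : cancel g h) (hK : cancel h g)
  (gZ : forall k m, (Z <= m)%N -> (g (k, m)).1 = s k /\ (g (k, m)).2%:Z = m%:Z + t k).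

Lemma pteq' (x y : pt n) : x.1 = y.1 -> x.2%:Z = y.2%:Z -> x = y.
Proof. by case: x y => x1 x2 [y1 y2] /= -> [->]. Qed.

Lemma walk' (u : pt n) a :
  (forall a', (a' < a)%N -> Z%:Z <= u.2%:Z + S s t u.1 a') ->
  (iter a g u).1 = (s ^+ a)%g u.1 /\ (iter a g u).2%:Z = u.2%:Z + S s t u.1 a.
Proof. by case: u => i m; apply: walk. Qed.

Lemma Xcl_self (y : pt n) : Xcl s t y.1 y.2%:Z y.
Proof.
apply/Xcl_iff; exists 0%N; split; first exact: cyc_gt0.
by rewrite expg0 perm1 S0 addr0 subrr dvdz0.
Qed.

Lemma orbit_struct x0 : infinite_orb g x0 ->
  exists (j j' : 'I_n) (d e N : nat),
   0 < tcl s t j /\ tcl s t j' < 0 /\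
   (forall x, (N <= x.2)%N ->
      (same_orb g x0 x <-> Xcl s t j d%:Z x \/ Xcl s t j' e%:Z x)).
Proof.
move=> hinf.
have [a0 Ha0] := ev_out (fwd_inj gK hinf) (M t Z).
have [a1 Ha1] := ev_out (bwd_inj gK hK hinf) (M t Z).
set y := iter a0 g x0; set z0 := iter a1 h x0.
have F1 : forall a, (M t Z <= (iter a g y).2)%N.
  by move=> a; rewrite /y -iterD; apply: Ha0; rewrite leq_addl.
have B1 : forall a, (M t Z <= (iter a h z0).2)%N.
  by move=> a; rewrite /z0 -iterD; apply: Ha1; rewrite leq_addl.
have hZM : forall m, (M t Z <= m)%N -> (Z <= m)%N.
  by move=> m; rewrite /M; lia.
have lineF : forall a, Xcl s t y.1 y.2%:Z (iter a g y).
  elim=> [|a IH]; first exact: Xcl_self.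
  have [g1 g2] := gZ' gZ (hZM _ (F1 a)).
  by rewrite iterS -(line_step _ _ g1 g2).
have lineB : forall a, Xcl s t z0.1 z0.2%:Z (iter a h z0).
  elim=> [|a IH]; first exact: Xcl_self.
  have [g1 g2] := gZ' gZ (hZM _ (B1 a.+1)).
  by rewrite (line_step _ _ g1 g2) iterS hK.
have Tpos : 0 < tcl s t y.1.
  have cl : forall l, (iter (cyc s y.1 * l)%N g y).1 = y.1 /\
      (iter (cyc s y.1 * l)%N g y).2%:Z = y.2%:Z + l%:Z * tcl s t y.1.
    elim=> [|l [IH1 IH2]]; first by rewrite muln0 /= mul0r addr0.
    have [c1 c2] := cstep gZ (F1 (cyc s y.1 * l)%N).
    rewrite mulnS iterD; rewrite IH1 in c1 c2; split => //.
    rewrite c2 IH2 intS; ring.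
  case: (ltrgt0P (tcl s t y.1)) => // hT.
    have [_ c2] := cl (y.2).+1; nia.
  have [c1 c2] := cl 1%N.
  have hp : (0 < cyc s y.1 * 1)%N by rewrite muln1 cyc_gt0.
  have hx : iter (cyc s y.1 * 1)%N g y = y.
    rewrite [X in _ = X](surjective_pairing y).
    by apply: pteq; [exact: c1 | rewrite c2 hT mulr0 addr0].
  by case: (periodic gK hp hx (inf_iter gK hinf)).
have Tneg : tcl s t z0.1 < 0.
  have cl : forall l, (iter (cyc s z0.1 * l)%N h z0).1 = z0.1 /\
      (iter (cyc s z0.1 * l)%N h z0).2%:Z + l%:Z * tcl s t z0.1 = z0.2%:Z.
    elim=> [|l [IH1 IH2]]; first by rewrite muln0 /= mul0r addr0.
    set u := iter (cyc s z0.1 * l.+1)%N h z0.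
    have ue : iter (cyc s z0.1) g u = iter (cyc s z0.1 * l)%N h z0.
      by rewrite /u mulnS iterD iter_gh.
    have [q [_ [hq _]]] := proj1 (Xcl_iff _ _ _ _ _) (lineB (cyc s z0.1 * l.+1)%N).
    rewrite -/u in hq.
    have ec : cyc s u.1 = cyc s z0.1 by rewrite hq cyc_perm.
    have et : tcl s t u.1 = tcl s t z0.1 by rewrite hq tcl_perm.
    have [c1 c2] := cstep gZ (B1 (cyc s z0.1 * l.+1)%N).
    rewrite -/u ec ue IH1 et in c1 c2.
    split; first by rewrite -c1.
    rewrite -IH2 c2 intS; ring.
  case: (ltrgt0P (tcl s t z0.1)) => // hT.
    have [_ c2] := cl (z0.2).+1; nia.
  have [c1 c2] := cl 1%N.
  have hp : (0 < cyc s z0.1 * 1)%N by rewrite muln1 cyc_gt0.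
  have e1 : iter (cyc s z0.1 * 1)%N h z0 = z0.
    rewrite [X in _ = X](surjective_pairing z0).
    by apply: pteq; [exact: c1 | rewrite -c2 hT mulr0 addr0].
  have hx : iter (cyc s z0.1 * 1)%N g z0 = z0 by rewrite -{2}e1 iter_gh.
  by case: (periodic gK hp hx (inf_iterh gK hK hinf)).
have [N0 HN0] := list_bound
  ([seq iter a g x0 | a <- iota 0 a0] ++ [seq iter a h x0 | a <- iota 0 a1]).
have hc1 := cyc_gt0 s y.1; have hc2 := cyc_gt0 s z0.1.
have hy1 := cyc_le s y.1; have hy2 := cyc_le s z0.1.
exists y.1, z0.1, y.2, z0.2, (N0 + y.2 + z0.2 + NB t + 1)%N.
split => //; split => // x hx; split.
- move=> [k [e|e]].
    case: (ltnP k a0) => hk.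
      have : x \in [seq iter a g x0 | a <- iota 0 a0] ++ [seq iter a h x0 | a <- iota 0 a1].
        by rewrite mem_cat; apply/orP; left; apply/mapP; exists k; rewrite ?mem_iota.
      move/HN0 => hh; exfalso; lia.
    left; have -> : x = iter (k - a0) g y by rewrite /y -iterD subnK.
    exact: lineF.
  have ex : x = iter k h x0 by rewrite -e iter_hg.
  case: (ltnP k a1) => hk.
    have : x \in [seq iter a g x0 | a <- iota 0 a0] ++ [seq iter a h x0 | a <- iota 0 a1].
      by rewrite mem_cat; apply/orP; right; apply/mapP; exists k; rewrite ?mem_iota.
    move/HN0 => hh; exfalso; lia.
  right; have -> : x = iter (k - a1) h z0 by rewrite /z0 -iterD subnK.
  exact: lineB.
- move=> [hX|hX].
    have [q [hq [h1 h2]]] := proj1 (Xcl_iff _ _ _ _ _) hX.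
    have [L hL] := dvdzP h2.
    have hSq := S_small s t y.1 (ltnW (leq_trans hq hy1)).
    have hL0 : 0 <= L by nia.
    set L' := `|L|%N.
    have eL : L = L'%:Z by rewrite /L' abszE ger0_norm.
    have H : forall a', (a' < cyc s y.1 * L' + q)%N -> Z%:Z <= y.2%:Z + S s t y.1 a'.
      move=> a' _; have := S_lo s t y.1 a'.
      have : 0 <= (a' %/ cyc s y.1)%N%:Z * tcl s t y.1 by rewrite mulr_ge0 // ltW.
      have := F1 0; rewrite /M /=; lia.
    have [w1 w2] := walk' H.
    exists (cyc s y.1 * L' + q + a0)%N; left; rewrite iterD.
    apply: pteq'.
      by rewrite w1 h1 expS_app cycm_fix.
    rewrite w2 S_per; move: hL; rewrite eL; lia.
  have [q [hq [h1 h2]]] := proj1 (Xcl_iff _ _ _ _ _) hX.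
  have [L hL] := dvdzP h2.
  have hSq := S_small s t z0.1 (ltnW (leq_trans hq hy2)).
  have hL0 : L < 0 by nia.
  set L' := `|L|%N.
  have eL : L = - L'%:Z by rewrite /L' abszE ltr0_norm ?opprK.
  have hL1 : (1 <= L')%N by rewrite /L' absz_gt0; lia.
  have hqa : (q <= cyc s z0.1 * L')%N by apply: leq_trans (ltnW hq) _; rewrite leq_pmulr.
  set a := (cyc s z0.1 * L' - q)%N.
  have eSx : forall a'', S s t x.1 a'' = S s t z0.1 (q + a'') - S s t z0.1 q.
    by move=> a''; rewrite h1 S_add addrC addKr.
  have H : forall a', (a' < a)%N -> Z%:Z <= x.2%:Z + S s t x.1 a'.
    move=> a' ha'; rewrite eSx.
    have ha2 : (q + a' < cyc s z0.1 * L')%N by rewrite /a in ha'; lia.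
    have := S_lo s t z0.1 (q + a'); have := div_le hc2 ha2.
    set r := ((q + a') %/ cyc s z0.1)%N => hr.
    have : L'%:Z * tcl s t z0.1 <= r%:Z * tcl s t z0.1 by nia.
    have := B1 0; rewrite /M /=; move: hL; rewrite eL; nia.
  have [w1 w2] := walk' H.
  exists (a1 + a)%N; right; rewrite iterD.
  have -> : iter a g x = z0.
    apply: pteq'.
      by rewrite w1 h1 -expS_app /a subnKC // cycm_fix.
    rewrite w2 eSx /a subnKC // S_cyc_mul; move: hL; rewrite eL; nia.
  exact: iter_gh.
Qed.

End Struct.
Set Implicit Arguments. Unset Strict Implicit. Unset Printing Implicit Defensive.
Import Order.TTheory GRing.Theory Num.Theory.
Local Open Scope ring_scope.

Section Fin.
Variables (n : nat) (g h : pt n -> pt n) (s : {perm 'I_n}) (t : 'I_n -> int) (Z : nat).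
Hypotheses (gK : cancel g h) (hK : cancel h g)
  (gZ : forall k m, (Z <= m)%N -> (g (k, m)).1 = s k /\ (g (k, m)).2%:Z = m%:Z + t k).

Lemma tcl_mem k j : k \in porbit s j -> tcl s t k = tcl s t j.
Proof. by move=> hk; rewrite /tcl (mem_eq_porbit hk). Qed.

Lemma inC_class i j k : inC g s t i j -> k \in porbit s j -> inC g s t i k.
Proof.
move=> [hi [hj hr]] hk; have hk' : inI s t k by rewrite /inI (tcl_mem hk).
split => //; split => //.
apply: rst_trans hr; apply: rst_sym; apply: rst_step.
by split => //; split => //; left.
Qed.

Lemma inC_class' i j k : inC g s t i k -> k \in porbit s j -> inI s t j ->
  inC g s t i j.
Proof.
move=> [hi [hk hr]] hkj hj; split => //; split => //.
apply: rst_trans hr; apply: rst_step.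
by split => //; split => //; left.
Qed.

Lemma Xcl_mem j d x : Xcl s t j d x -> x.1 \in porbit s j.
Proof. by move=> /Xcl_iff [q [_ [-> _]]]; apply: mem_porbit. Qed.

Lemma partA i k m : inC g s t i k -> (M t Z <= m)%N -> in_gi g s t i (k, m).
Proof.
move=> hk hm; have hT : tcl s t k != 0 by case: hk => _ [].
have hinf := inf_ray gZ hT hm.
have [j [j' [d [e [N [Tp [Tn HN]]]]]]] := orbit_struct gK hK gZ hinf.
have hap : almost_pair s t j d%:Z j' e%:Z (same_orb g (k, m)).
  split.
    move=> x [/Xcl_mem h1 /Xcl_mem h2].
    have : tcl s t j = tcl s t j' by rewrite -(tcl_mem h1) (tcl_mem h2).
    lia.
  apply: (box_almost (N := N)) => x hx; rewrite ltnNge; apply/negP => hN.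
  exact: hx (HN x hN).
have hp := ray_orb gZ N hT hm.
have hpN : (N <= (k, (m + N * `|tcl s t k|)%N).2)%N.
  have : (0 < `|tcl s t k|)%N by rewrite absz_gt0.
  rewrite /=; nia.
have hij : inI s t j by rewrite /inI; lia.
have hij' : inI s t j' by rewrite /inI; lia.
have hrel : base_rel g s t j j'.
  split => //; split => //; right; exists (k, m), d, e; exact: hap.
split => //; exists j, j', d, e.
have [hX|hX] := proj1 (HN _ hpN) hp.
  have hj := inC_class' hk (Xcl_mem hX) hij.
  split => //; split => //.
  case: hj => [hi [_ hr]]; split => //; split => //.
  apply: rst_trans hr; apply: rst_sym; exact: rst_step.
have hj' := inC_class' hk (Xcl_mem hX) hij'.
split => //.
case: (hj') => [hi [_ hr]]; split => //; split => //.
apply: rst_trans hr; exact: rst_step.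
Qed.

Lemma partB i k m : ~ inC g s t i k -> (M t Z <= m)%N -> ~ in_gi g s t i (k, m).
Proof.
move=> hk hm [hinf [j [j' [d [e [hj [hj' [_ [lst Hl]]]]]]]]].
case: (eqVneq (tcl s t k) 0) => hT.
  have [c1 c2] := cstep gZ (u := (k, m)) hm.
  apply: (periodic gK (cyc_gt0 s k) _ hinf).
  apply: pteq' => //=; rewrite c2 /= hT addr0 //.
have [N HN] := list_bound lst.
set p := (k, (m + N * `|tcl s t k|)%N).
have hp : same_orb g (k, m) p := ray_orb gZ N hT hm.
have hpn : ~ (p \in lst).
  move/HN; have : (0 < `|tcl s t k|)%N by rewrite absz_gt0.
  rewrite /=; nia.
have hiff : same_orb g (k, m) p <-> Xcl s t j d%:Z p \/ Xcl s t j' e%:Z p.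
  by case: (classic (same_orb g (k, m) p <-> Xcl s t j d%:Z p \/ Xcl s t j' e%:Z p))
    => // hn; case: hpn; apply: Hl.
have [hX|hX] := proj1 hiff hp.
  by apply: hk; apply: (inC_class hj (Xcl_mem hX)).
by apply: hk; apply: (inC_class hj' (Xcl_mem hX)).
Qed.

Lemma in_gi_g i x : in_gi g s t i (g x) <-> in_gi g s t i x.
Proof. by rewrite /in_gi /infinite_orb (same_orb_g gK). Qed.

End Fin.
Set Implicit Arguments. Unset Strict Implicit. Unset Printing Implicit Defensive.
Import Order.TTheory GRing.Theory Num.Theory.
Local Open Scope ring_scope.

Definition bP (P : Prop) : bool := if excluded_middle_informative P then true else false.
Lemma bPP (P : Prop) : bP P <-> P.
Proof. by rewrite /bP; case: excluded_middle_informative. Qed.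
Lemma bPT (P : Prop) : P -> bP P = true.
Proof. by rewrite /bP; case: excluded_middle_informative. Qed.
Lemma bPF (P : Prop) : ~ P -> bP P = false.
Proof. by rewrite /bP; case: excluded_middle_informative. Qed.

Lemma sactK n (s : {perm 'I_n}) : cancel (sact s) (sact s^-1).
Proof. by case=> a b; rewrite /sact /= permK. Qed.
Lemma sactKV n (s : {perm 'I_n}) : cancel (sact s^-1) (sact s).
Proof. by case=> a b; rewrite /sact /= permKV. Qed.

Theorem lemma4p19 (n : nat) (hn : (2 <= n)%N) (g : pt n -> pt n)
  (s : {perm 'I_n}) (t : 'I_n -> int) (hg : decomp g s t)
  (i : 'I_n) (hi : inI s t i) :
  in_HS (gsub g s t i) /\ (forall x, gsub g s t i (g x) = g (gsub g s t i x)).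
Proof.
have [w [[wbij _] [wt hgw]]] := hg.
have [wi wK wKi] := wbij.
set h := fun x => wi (sact s^-1 x).
have gK : cancel g h by move=> x; rewrite /h hgw sactK wK.
have hK : cancel h g by move=> x; rewrite /h hgw wKi sactKV.
pose zf := fun k => proj1_sig (constructive_indefinite_description _ (wt k)).
have hzf : forall k m, (zf k <= m)%N ->
    (w (k, m)).1 = k /\ (w (k, m)).2%:Z = m%:Z + t k.
  by move=> k; rewrite /zf; case: constructive_indefinite_description.
set Z := (\max_(k : 'I_n) zf k)%N.
have gZ : forall k m, (Z <= m)%N -> (g (k, m)).1 = s k /\ (g (k, m)).2%:Z = m%:Z + t k.
  move=> k m hm; have [h1 h2] := hzf k m (leq_trans (leq_bigmax k) hm).
  by rewrite hgw /sact /= h1 h2.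
have gsubE : forall x, in_gi g s t i x -> gsub g s t i x = g x.
  by move=> x hx; rewrite /gsub; case: excluded_middle_informative.
have gsubN : forall x, ~ in_gi g s t i x -> gsub g s t i x = x.
  by move=> x hx; rewrite /gsub; case: excluded_middle_informative.
split; last first.
  move=> x; case: (classic (in_gi g s t i x)) => hx.
    have hgx : in_gi g s t i (g x) by apply: (proj2 (in_gi_g s t gK i x)).
    by rewrite (gsubE x hx) (gsubE (g x) hgx).
  have hgx : ~ in_gi g s t i (g x) by move=> hh; apply: hx; exact: (proj1 (in_gi_g s t gK i x)).
  by rewrite (gsubN x hx) (gsubN (g x) hgx).
set P := fun k => inC g s t i k.
have Ps : forall k, P k <-> P (s k).
  move=> k; split => hk.
    by apply: (inC_class hk); have := mem_porbit s 1 k; rewrite expg1.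
  by apply: (inC_class hk); rewrite porbit_sym; have := mem_porbit s 1 k; rewrite expg1.
pose f := fun k => if bP (P k) then s k else k.
have finj : injective f.
  move=> a b; rewrite /f.
  case: (classic (P a)) => ha; case: (classic (P b)) => hb;
    rewrite ?(bPT ha) ?(bPF ha) ?(bPT hb) ?(bPF hb).
  - exact: perm_inj.
  - move=> e; exfalso; apply: hb; rewrite -e; exact: (proj1 (Ps a)).
  - move=> e; exfalso; apply: ha; rewrite e; exact: (proj1 (Ps b)).
  - by [].
set s' := perm finj.
have s'E : forall k, s' k = f k by move=> k; rewrite permE.
exists s', (fun k => if bP (P k) then t k else 0).
exists (fun x => sact s'^-1 (gsub g s t i x)).
have trw : forall k, transl (fun x => sact s'^-1 (gsub g s t i x)) k
                        (if bP (P k) then t k else 0).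
  move=> k; exists (M t Z) => m hm.
  case: (classic (P k)) => hk; rewrite ?(bPT hk) ?(bPF hk).
    rewrite gsubE; last exact: (partA gK hK gZ hk hm).
    have hZm : (Z <= m)%N by move: hm; rewrite /M; lia.
    have [g1 g2] := gZ k m hZm.
    have e1 : s' k = s k by rewrite s'E /f bPT.
    by rewrite /sact /= g1 g2 -e1 permK.
  rewrite gsubN; last exact: (partB gK gZ hk hm).
  have e1 : s' k = k by rewrite s'E /f bPF.
  by rewrite /sact /= -{1}e1 permK addr0.
split; last split.
- split; last by move=> k; exists (if bP (P k) then t k else 0); apply: trw.
  pose gi := fun x => if bP (in_gi g s t i x) then h x else x.
  exists (fun x => gi (sact s' x)).
    move=> x; rewrite sactKV /gi.
    case: (classic (in_gi g s t i x)) => hx.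
      have hgx : in_gi g s t i (g x) by apply: (proj2 (in_gi_g s t gK i x)).
      by rewrite gsubE // (bPT hgx) gK.
    by rewrite gsubN // bPF.
  move=> x; rewrite /gi.
  case: (classic (in_gi g s t i (sact s' x))) => hx; rewrite ?(bPT hx) ?(bPF hx).
    rewrite gsubE; first by rewrite hK sactK.
    by apply: (proj1 (in_gi_g s t gK i _)); rewrite hK.
  by rewrite gsubN // sactK.
- exact: trw.
- by move=> x; rewrite sactKV.
Qed.
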